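(* Let $D$ be the minimal Dress ring of $\mathbb{R}(X)$ and let $J$ be the ideal of $D$ generated by a family $(r_i)_{i\in\Lambda}$ of elements of $D$. Then $J^2$ is the ideal generated by $(r_i^2)_{i\in\Lambda}$.
   Context: $D$ denotes the minimal Dress ring of the field $\mathbb{R}(X)$, i.e. the subring of $\mathbb{R}(X)$ generated by $\mathbb{Z}$ and all elements $1/(1+h^2)$ with $h\in\mathbb{R}(X)$. *)

(* Defs.v *)
From HB Require Import structures.
From Stdlib Require Import Reals ClassicalEpsilon FunctionalExtensionality.
From mathcomp Require Import all_boot all_order all_algebra.
Set Implicit Arguments. Unset Strict Implicit. Unset Printing Implicit Defensive.
Import GRing.Theory.

Definition R_eqb (x y : R) : bool := if Req_EM_T x y then true else false.
Lemma R_eqP : Equality.axiom R_eqb.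
Proof. by move=> x y; rewrite /R_eqb; case: Req_EM_T => h; constructor. Qed.
HB.instance Definition _ := hasDecEq.Build R R_eqP.

Definition R_find (P : pred R) (n : nat) : option R :=
  match excluded_middle_informative (exists x, P x) with
  | left h => Some (proj1_sig (constructive_indefinite_description _ h))
  | right _ => None
  end.
Lemma R_find_correct P n x : R_find P n = Some x -> P x.
Proof.
rewrite /R_find; case: excluded_middle_informative => // h [<-].
exact: proj2_sig (constructive_indefinite_description _ h).
Qed.
Lemma R_find_complete (P : pred R) : (exists x, P x) -> exists n, R_find P n.
Proof. by move=> h; exists 0%N; rewrite /R_find; case: excluded_middle_informative. Qed.
Lemma R_find_ext (P Q : pred R) : P =1 Q -> R_find P =1 R_find Q.
Proof. by move=> h; have -> : P = Q by apply: functional_extensionality. Qed.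
HB.instance Definition _ := hasChoice.Build R R_find_correct R_find_complete R_find_ext.

Lemma R_addA : @associative R Rplus. Proof. by move=> x y z; rewrite Rplus_assoc. Qed.
Lemma R_addC : @commutative R R Rplus. Proof. exact: Rplus_comm. Qed.
Lemma R_add0 : @left_id R R R0 Rplus. Proof. exact: Rplus_0_l. Qed.
Lemma R_addN : @left_inverse R R R R0 Ropp Rplus. Proof. exact: Rplus_opp_l. Qed.
HB.instance Definition _ := GRing.isZmodule.Build R R_addA R_addC R_add0 R_addN.

Lemma R_mulA : @associative R Rmult. Proof. by move=> x y z; rewrite Rmult_assoc. Qed.
Lemma R_mulC : @commutative R R Rmult. Proof. exact: Rmult_comm. Qed.
Lemma R_mul1 : @left_id R R R1 Rmult. Proof. exact: Rmult_1_l. Qed.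
Lemma R_mulDl : @left_distributive R R Rmult Rplus. Proof. by move=> x y z; rewrite Rmult_plus_distr_r. Qed.
Lemma R_one_neq0 : R1 != R0.
Proof. by apply/eqP; exact: R1_neq_R0. Qed.
HB.instance Definition _ :=
  GRing.Zmodule_isComNzRing.Build R R_mulA R_mulC R_mul1 R_mulDl R_one_neq0.

Local Open Scope ring_scope.
Definition R_inv (x : R) : R := Rinv x.
Lemma R_mulVf (x : R) : x != 0 -> R_inv x * x = 1.
Proof. by move/eqP=> h; exact: Rinv_l. Qed.
Lemma R_inv0 : R_inv 0 = 0. Proof. exact: Rinv_0. Qed.
HB.instance Definition _ := GRing.ComNzRing_isField.Build R R_mulVf R_inv0.

Definition RX : fieldType := {fraction {poly R}}.

Inductive in_D : RX -> Prop :=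
  | D_int (z : int) : in_D (z%:~R)
  | D_gen (h : RX) : in_D ((1 + h ^+ 2)^-1)
  | D_add (a b : RX) : in_D a -> in_D b -> in_D (a + b)
  | D_opp (a : RX) : in_D a -> in_D (- a)
  | D_mul (a b : RX) : in_D a -> in_D b -> in_D (a * b).

Definition D_ideal_gen (S : RX -> Prop) (z : RX) : Prop :=
  exists l : seq (RX * RX),
    (forall p, p \in l -> in_D p.1 /\ S p.2) /\
    z = \sum_(p <- l) p.1 * p.2.

Definition D_ideal_mul (I J : RX -> Prop) : RX -> Prop :=
  D_ideal_gen (fun x => exists a b, I a /\ J b /\ x = a * b).

(* Main.v *)
Require Import Defs.
From HB Require Import structures.
From Stdlib Require Import Reals Lra Psatz.
From mathcomp Require Import all_boot all_order all_algebra.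
From mathcomp Require Import ring.
Import GRing.Theory.
Local Open Scope ring_scope.
Local Open Scope quotient_scope.
Local Notation tf := (@FracField.tofrac {poly R}).

Lemma frac_repr (x : RX) : exists n d : {poly R}, d != 0 /\ x = tf n / tf d.
Proof.
elim/quotW: x => x.
exists (\n_x), (\d_x); split; first exact: denom_ratioP.
rewrite !piE.
apply/eqmodP => /=.
rewrite FracField.equivfE /=.
have hd := denom_ratioP x.
rewrite /FracField.mulf /FracField.invf !numer_Ratio ?denom_Ratio ?numer_Ratio ?denom_Ratio ?oner_eq0 ?mul1r //.
by rewrite mulr1 mulrC.
Qed.

Lemma R_sq (x y : R) : x * x + y * y = 0 -> x = 0.
Proof.
move=> H; change (Rplus (Rmult x x) (Rmult y y) = R0) in H.
change (x = R0); nra.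
Qed.

Lemma sos_poly (p q : {poly R}) : q * q + p * p = 0 -> q = 0.
Proof.
move=> H; apply/eqP; apply/negPn/negP => qn0.
have : (size (map INR (iota 0 (size q))) < size q)%N.
  apply: max_poly_roots => //.
    apply/allP => x _; rewrite /root; apply/eqP.
    have := congr1 (fun s => s.[x]) H.
    rewrite hornerD !hornerM horner0; exact: R_sq.
  rewrite map_inj_uniq ?iota_uniq // => a b; exact: INR_eq.
by rewrite size_map size_iota ltnn.
Qed.

Lemma one_sq_neq0 (h : RX) : 1 + h ^+ 2 != 0.
Proof.
have [n [d [hd ->]]] := frac_repr h.
have hd' : tf d != 0 by rewrite tofrac_eq0.
apply/eqP => E.
have : tf (d * d + n * n) = 0.
  rewrite rmorphD !rmorphM /=.
  have -> : tf d * tf d + tf n * tf n = tf d ^+ 2 * (1 + (tf n / tf d) ^+ 2)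
    by rewrite mulrDr mulr1 exprMn exprVn mulrCA mulfV ?expf_neq0 // mulr1 !expr2.
  by rewrite E mulr0.
move/eqP; rewrite tofrac_eq0 => /eqP /sos_poly hd0.
by rewrite hd0 eqxx in hd.
Qed.

Lemma D_one : in_D 1.
Proof. by have := D_int 1%Z; rewrite /intmul /= mulr1n. Qed.

Lemma D_zero : in_D 0.
Proof. by have := D_int 0%Z. Qed.

Lemma two_neq0 : (1 + 1 ^+ 2 : RX) != 0.
Proof. exact: one_sq_neq0. Qed.

Lemma D_hv (h : RX) : in_D (h / (1 + h ^+ 2)).
Proof.
have [e|u0] := eqVneq (1 + h) 0.
  have -> : h = -1 by apply/eqP; rewrite -addr_eq0 addrC e.
  rewrite sqrrN mulN1r; apply: D_opp; exact: D_gen.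
have v0 := one_sq_neq0 h; have t0 := two_neq0.
set v := 1 + h ^+ 2; set two := (1 + 1 ^+ 2 : RX).
set u := 1 + h; set g := (1 - h) / u.
have e1 : 1 + g ^+ 2 = (two * v) * (u ^+ 2)^-1.
  have -> : two * v = u ^+ 2 + (1 - h) ^+ 2 by rewrite /two /v /u; ring.
  by rewrite /g exprMn exprVn mulrDl (mulfV (expf_neq0 2 u0)).
have -> : h / v = (1 + g ^+ 2)^-1 + - two^-1.
  rewrite e1 invfM invrK.
  apply: (mulIf (mulf_neq0 t0 v0)).
  have -> : h / v * (two * v) = h * two * (v / v) by ring.
  rewrite (mulfV v0).
  rewrite -/two -/v.
  have -> : ((two * v)^-1 * u ^+ 2 - two^-1) * (two * v)
      = u ^+ 2 * ((two * v) / (two * v)) - v * (two / two) by ring.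
  rewrite (mulfV (mulf_neq0 t0 v0)) (mulfV t0) !mulr1 /u /v /two; ring.
apply: D_add; [exact: D_gen | apply: D_opp; exact: D_gen].
Qed.

Lemma key (a b : RX) : exists c, in_D c /\ a * b = a ^+ 2 * c + b ^+ 2 * c.
Proof.
have [->|a0] := eqVneq a 0.
  by exists 0; split; [exact: D_zero | rewrite !mulr0 mul0r addr0].
set h := b / a.
exists (h / (1 + h ^+ 2)); split; first exact: D_hv.
have v0 := one_sq_neq0 h.
have eb : b = h * a by rewrite /h (mulfVK a0).
have -> : a * b = a ^+ 2 * h by rewrite [in LHS]eb; ring.
rewrite [in RHS]eb.
have -> : a ^+ 2 * (h / (1 + h ^+ 2)) + (h * a) ^+ 2 * (h / (1 + h ^+ 2))
   = a ^+ 2 * h * ((1 + h ^+ 2) / (1 + h ^+ 2)) by ring.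
by rewrite (mulfV v0) mulr1.
Qed.

Section Ideal.
Variable S : RX -> Prop.
Local Notation G := (D_ideal_gen S).

Lemma G0 : G 0.
Proof. by exists [::]; split => //; rewrite big_nil. Qed.

Lemma GD x y : G x -> G y -> G (x + y).
Proof.
move=> [l1 [h1 ->]] [l2 [h2 ->]]; exists (l1 ++ l2); split; last by rewrite big_cat.
by move=> p; rewrite mem_cat => /orP [/h1|/h2].
Qed.

Lemma GM d x : in_D d -> G x -> G (d * x).
Proof.
move=> hd [l [hl ->]]; exists [seq (d * p.1, p.2) | p <- l]; split.
  move=> p /mapP [q /hl [hq1 hq2] ->] /=; split => //; exact: D_mul.
by rewrite big_map mulr_sumr; apply: eq_bigr => p _; rewrite mulrA.
Qed.

Lemma Gs s : S s -> G s.
Proof.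
move=> hs; exists [:: (1, s)]; split; last by rewrite big_seq1 mul1r.
by move=> p; rewrite inE => /eqP -> /=; split => //; exact: D_one.
Qed.

Lemma Gsum (I : eqType) (l : seq I) (F : I -> RX) :
  (forall i, i \in l -> G (F i)) -> G (\sum_(i <- l) F i).
Proof.
move=> h; rewrite big_seq; apply: (big_ind G) => //; [exact: G0 | exact: GD].
Qed.
End Ideal.

Theorem proposition2p2 (Lambda : Type) (r : Lambda -> RX)
    (hr : forall i, in_D (r i)) :
  let J := D_ideal_gen (fun x => exists i, x = r i) in
  forall z : RX,
    D_ideal_mul J J z <-> D_ideal_gen (fun x => exists i, x = r i ^+ 2) z.
Proof.
move=> J z; split.
  move=> [l [hl ->]]; apply: Gsum => p /hl [hp1 [a [b [[la [hla ->]] [[lb [hlb ->]] ->]]]]].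
  apply: GM => //; rewrite mulr_suml; apply: Gsum => q /hla [hq1 [i ->]].
  rewrite -mulrA; apply: GM => //; rewrite mulr_sumr; apply: Gsum => q' /hlb [hq1' [j ->]].
  rewrite mulrCA; apply: GM => //.
  have [c [hc ->]] := key (r i) (r j).
  apply: GD; rewrite mulrC; apply: GM => //; apply: Gs; by [exists i | exists j].
move=> [l [hl ->]]; exists l; split => // p /hl [hp1 [i ->]]; split => //.
exists (r i), (r i); split; first by apply: Gs; exists i.
by split; [apply: Gs; exists i | rewrite expr2].
Qed.
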